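(* Let $v,w\ge 1$ be integers and $e$ a real number, and let $P(v,w,e)=e^3-(v+w)e^2+2vwe-v^2w^2$. If $P(v,w,e)\le 0$, then $P(v+1,w,e+1)\le 0$. *)

(* Defs.v *)
From Stdlib Require Import Reals Lra Lia.
Open Scope R_scope.

Definition P (v w e : R) : R :=
  e ^ 3 - (v + w) * e ^ 2 + 2 * v * w * e - v ^ 2 * w ^ 2.

(* Main.v *)
Require Import Defs.
From Stdlib Require Import Reals.
Open Scope R_scope.
From Stdlib Require Import Lra Psatz.
Lemma aux_t (a b e : R) (ha : 1 <= a) (hb : 1 <= b) :
  P a b e <= 0 -> P (a + 1) b (e + 1) <= 0.
Proof. unfold P; intros H.
destruct (Rle_dec (e+1) 0).
- assert (0 <= (e+1)^2) by nra. assert ((e+1)^3 <= 0) by nra.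
  assert (0 <= (a+1+b)*(e+1)^2) by (apply Rmult_le_pos; lra).
  assert (0 <= (a+1)*b) by nra.
  assert (2*(a+1)*b*(e+1) <= 0) by nra.
  assert (0 <= (a+1)^2*b^2) by nra. lra.
- destruct (Rle_dec e 0).
  { assert (hy : 0 < e+1 <= 1) by lra.
    assert (0 <= (e+1)^2) by nra.
    assert ((e+1)^3 <= (e+1)^2) by (replace ((e+1)^3) with ((e+1)*(e+1)^2) by ring; nra).
    assert (0 <= (a+b)*(e+1)^2) by (apply Rmult_le_pos; lra).
    assert ((e+1)^2 <= (a+1+b)*(e+1)^2) by (replace ((a+1+b)*(e+1)^2) with ((e+1)^2 + (a+b)*(e+1)^2) by ring; lra).
    assert (hab : 2 <= (a+1)*b) by nra.
    assert (0 <= ((a+1)*b)*(1-(e+1))) by (apply Rmult_le_pos; lra).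
    assert (2*(a+1)*b*(e+1) <= 2*(a+1)*b) by lra.
    assert (0 <= ((a+1)*b)*((a+1)*b-2)) by (apply Rmult_le_pos; lra).
    assert (2*((a+1)*b) <= ((a+1)*b)^2) by lra.
    replace ((a+1)^2*b^2) with (((a+1)*b)^2) by ring. lra. }
  remember (e - a) as t eqn:Et. remember (b*(b-1)) as s eqn:Es.
  assert (hs : 0 <= s) by (subst s; nra).
  assert (HP : e ^ 3 - (a + b) * e ^ 2 + 2 * a * b * e - a ^ 2 * b ^ 2
     = t*((a+t)^2 - b*t) - a^2*s) by (subst t s; field).
  assert (HQ : (e + 1) ^ 3 - (a + 1 + b) * (e + 1) ^ 2 + 2 * (a + 1) * b * (e + 1) -
   (a + 1) ^ 2 * b ^ 2 = (e ^ 3 - (a + b) * e ^ 2 + 2 * a * b * e - a ^ 2 * b ^ 2)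
     + (2*t*(a+t+1/2) - (2*a+1)*s)) by (subst t s; field).
  rewrite HQ. rewrite HP in H |- *.
  assert (hat : a + t = e) by (subst t; ring).
  destruct (Rle_dec t 0).
  + assert (2*t*(a+t+1/2) <= 0) by nra.
    assert (0 <= (2*a+1)*s) by nra. lra.
  + destruct (Rle_dec (2*t*(a+t+1/2) - (2*a+1)*s) 0) as [hD|hD]; [lra|].
    exfalso.
    assert (h1 : (2*a+1)*(t*((a+t)^2 - b*t)) <= (2*a+1)*(a^2*s)) by
      (apply Rmult_le_compat_l; lra).
    assert (h2 : (2*a+1)*(a^2*s) < a^2 * (2*t*(a+t+1/2))).
    { assert (0 < a^2) by nra. 
      replace ((2*a+1)*(a^2*s)) with (a^2*((2*a+1)*s)) by ring.
      apply Rmult_lt_compat_l; lra. }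
    assert (h3 : t * ((2*a+1)*(2*a+t-b) - 2*a^2) < 0) by nra.
    assert (h4 : (2*a+1)*(2*a+t-b) - 2*a^2 < 0).
    { destruct (Rle_dec 0 ((2*a+1)*(2*a+t-b) - 2*a^2)); [|lra].
      assert (0 <= t * ((2*a+1)*(2*a+t-b) - 2*a^2)) by (apply Rmult_le_pos; lra). lra. }
    assert (h5 : t < b - a) by nra.
    assert (h6 : 2*t*(a+t+1/2) < (b-a)*(2*b+1)) by nra.
    assert (h7 : (b-a)*(2*b+1) <= (2*a+1)*s) by (subst s; nra).
    lra.
Qed.

Theorem lemma4p7 (v w : nat) (e : R) (hv : (1 <= v)%nat) (hw : (1 <= w)%nat) :
  P (INR v) (INR w) e <= 0 -> P (INR v + 1) (INR w) (e + 1) <= 0.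
Proof.
  apply aux_t.
  - apply le_INR in hv. simpl in hv. exact hv.
  - apply le_INR in hw. simpl in hw. exact hw.
Qed.
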